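(* Let $G=(V,E)$ be a connected undirected graph with positive edge weights $w$, and run the distributed algorithm described in the context synchronously at every node. Then for every node $v\in V$ and every node $t\in V$: at any time after the first $\mathrm{maxhop}(v,t)+1$ phases have been completed, the variable $\mathrm{NH}[t]$ at $v$ equals $\mathsf{NH}_v(t)$; and at any time after the first $\mathcal{D}(G)+2$ phases have been completed, the variable $\mathrm{PH}[t]$ at $v$ equals $\mathsf{PH}_v(t)$.
   Context: Graph notions. $G=(V,E)$ is connected, undirected, with weights $w(e)>0$; $N(v)$ is the set of neighbors of $v$ and $N[v]=N(v)\cup\{v\}$. The length of a path is the sum of its edge weights; $\mathrm{dist}(s,t)$ is the length of a shortest $s$–$t$ path. For $s\neq t$, $\mathrm{maxhop}(s,t)$ is the maximum number of edges of a shortest (minimum-length) $s$–$t$ path, $\mathrm{maxhop}(s,s)=0$, and $\mathcal{D}(G)=\max_{s,t\in V}\mathrm{maxhop}(s,t)$. $\mathsf{NH}_v(t)$ is the set of neighbors of $v$ that lie on some shortest path from $v$ to $t$; $\mathsf{PH}_v(s)$ is the set of neighbors $u$ of $v$ such that $v$ lies on some shortest path from $s$ to $u$. Algorithm (at each node $v$). Initialization: for all $t\in V$: $D[t]=+\infty$, $\mathrm{NH}[t]=\mathrm{PH}[t]=\emptyset$, and for all $u\in N[v]$: $B[u,t]=0$, $S[u,t]=0$; then $S[v,v]=1$, $D[v]=0$. Execution proceeds in synchronous phases; in each phase every node $v$ sends, for every $t\in V$, the message $(t,D[t],S[v,t],B[v,t])$ to every neighbor, receives all messages sent to it by its neighbors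 in that phase, and processes each of them (in arbitrary order) as follows. On receipt of $(t,d,s,b)$ from $u\in N(v)$: remove $u$ from $\mathrm{NH}[t]$ and from $\mathrm{PH}[t]$; if $d+w(\{u,v\})<D[t]$ set $D[t]\leftarrow d+w(\{u,v\})$; else if $d+w(\{u,v\})=D[t]$ add $u$ to $\mathrm{NH}[t]$; else if $d-w(\{u,v\})=D[t]$ add $u$ to $\mathrm{PH}[t]$. Then set $S[u,t]\leftarrow s$, $B[u,t]\leftarrow b$; if $t\neq v$ set $S[v,t]\leftarrow\sum_{x\in\mathrm{NH}[t]}S[x,t]$; set $B[v,t]\leftarrow S[v,t]\cdot\sum_{x\in\mathrm{PH}[t]}\frac{B[x,t]+1}{S[x,t]}$ (a term with $S[x,t]=0$ is taken as $0$); finally set $C\leftarrow\sum_{x\neq v}B[v,x]$. *)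

(* Defs.v *)
From HB Require Import structures.
From mathcomp Require Import all_boot all_order all_algebra.
From Stdlib Require Import ClassicalEpsilon.
Set Implicit Arguments. Unset Strict Implicit. Unset Printing Implicit Defensive.
Import Order.TTheory GRing.Theory Num.Theory.
Local Open Scope ring_scope.

Definition pdec (P : Prop) : bool :=
  if excluded_middle_informative P then true else false.

Section Algo.
Variables (R : realFieldType) (V : finType) (e : rel V) (w : V -> V -> R).

Fixpoint plen (x : V) (p : seq V) : R :=
  if p is y :: p' then w x y + plen y p' else 0.

(* p is (the tail of) a walk s = x_0, x_1, ..., x_k = t, i.e. p = [x_1; ...; x_k] *)
Definition walk (s t : V) (p : seq V) : Prop := path e s p /\ last s p = t.

Definition shortest (s t : V) (p : seq V) : Prop :=
  walk s t p /\ forall q, walk s t q -> plen s p <= plen s q.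

(* maxhop s t: maximal number of edges of a shortest s-t path (0 if s = t).
   Shortest walks are simple (positive weights) so they have < #|V| edges. *)
Definition maxhop (s t : V) : nat :=
  if s == t then 0%N else
  \max_(k < #|V|) (if pdec (exists p, shortest s t p /\ size p = k) then (k : nat) else 0%N).

Definition DG : nat := \max_(s : V) \max_(t : V) maxhop s t.

Definition NHset (v t : V) : {set V} :=
  [set u | e v u && pdec (exists p, shortest v t (u :: p))].

Definition PHset (v s : V) : {set V} :=
  [set u | e v u && pdec (exists q, shortest s u (rcons q u) /\ last s q = v)].

(* distances in R extended with +oo, represented by None *)
Definition oadd (d : option R) (x : R) : option R := omap (fun y => y + x) d.
Definition osub (d : option R) (x : R) : option R := omap (fun y => y - x) d.
Definition olt (a b : option R) : bool :=
  match a, b with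
  | Some x, Some y => x < y
  | Some _, None => true
  | None, _ => false
  end.

Record nstate := NState {
  sD  : V -> option R;
  sNH : V -> {set V};
  sPH : V -> {set V};
  sS  : V -> V -> R;
  sB  : V -> V -> R;
  sC  : R
}.

Definition upd {T : Type} (f : V -> T) (t : V) (x : T) : V -> T :=
  fun t' => if t' == t then x else f t'.
Definition upd2 (f : V -> V -> R) (u t : V) (x : R) : V -> V -> R :=
  fun u' t' => if (u' == u) && (t' == t) then x else f u' t'.

Definition proc (v u t : V) (m : option R * R * R) (ns : nstate) : nstate :=
  let: (d, s, b) := m in
  let wuv := w u v in
  let D := sD ns t in
  let NH0 := sNH ns t :\ u in
  let PH0 := sPH ns t :\ u in
  let: (D', NH1, PH1) :=
    if olt (oadd d wuv) D then (oadd d wuv, NH0, PH0)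
    else if oadd d wuv == D then (D, u |: NH0, PH0)
    else if osub d wuv == D then (D, NH0, u |: PH0)
    else (D, NH0, PH0) in
  let S1 := upd2 (sS ns) u t s in
  let B1 := upd2 (sB ns) u t b in
  let Svt := if t != v then \sum_(x in NH1) S1 x t else S1 v t in
  let S2 := upd2 S1 v t Svt in
  let Bvt := Svt * \sum_(x in PH1)
                     (if S2 x t == 0 then 0 else (B1 x t + 1) / S2 x t) in
  let B2 := upd2 B1 v t Bvt in
  NState (upd (sD ns) t D') (upd (sNH ns) t NH1) (upd (sPH ns) t PH1)
         S2 B2 (\sum_(x | x != v) B2 v x).

Definition init (v : V) : nstate :=
  NState (fun t => if t == v then Some 0 else None) (fun _ => set0) (fun _ => set0)
         (fun u t => if (u == v) && (t == v) then 1 else 0) (fun _ _ => 0) 0.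

Definition msgs (v : V) : seq (V * V) := [seq (u, t) | u <- enum (e v), t <- enum V].

(* message (t, D[t], S[u,t], B[u,t]) sent by u, read from u's state at phase start *)
Definition msg (st : V -> nstate) (u t : V) : option R * R * R :=
  (sD (st u) t, sS (st u) u t, sB (st u) u t).

Variable sched : nat -> V -> seq (V * V).
(* sched n v: the (arbitrary) order in which v processes, in phase n (0-based),
   the messages (u, t) of that phase *)

Definition process (st : V -> nstate) (v : V) (ms : seq (V * V)) (ns : nstate) : nstate :=
  foldl (fun ns ut => proc v ut.1 ut.2 (msg st ut.1 ut.2) ns) ns ms.

Fixpoint run (n : nat) : V -> nstate :=
  if n is n'.+1 then (fun v => process (run n') v (sched n' v) (run n' v))
  else init.

(* state of v after n completed phases and the first j receptions of phase n *)
Definition mid (n j : nat) (v : V) : nstate :=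
  process (run n) v (take j (sched n v)) (run n v).

End Algo.

(* Main.v *)
Require Import Defs.
From HB Require Import structures.
From mathcomp Require Import all_boot all_order all_algebra.
Import Order.TTheory GRing.Theory Num.Theory.
Local Open Scope ring_scope.
From Stdlib Require Import ClassicalEpsilon.
Set Implicit Arguments. Unset Strict Implicit. Unset Printing Implicit Defensive.

Lemma pdecP (P : Prop) : reflect P (pdec P).
Proof. by rewrite /pdec; case: excluded_middle_informative => H; constructor. Qed.

Section Graph.
Variables (R : realFieldType) (V : finType) (e : rel V) (w : V -> V -> R).
Hypotheses (esym : symmetric e) (wpos : forall u v, e u v -> 0 < w u v)
  (wsym : forall u v, w u v = w v u).

Lemma plen_cat x p q : plen w x (p ++ q) = plen w x p + plen w (last x p) q.
Proof. by elim: p x => [|y p IH] x /=; [rewrite add0r | rewrite IH addrA]. Qed.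

Lemma plen_ge0 x p : path e x p -> 0 <= plen w x p.
Proof.
elim: p x => //= y p IH x /andP[exy pp].
by rewrite addr_ge0 //; [exact/ltW/wpos | exact: IH].
Qed.

Lemma last_rev_belast (x : V) p : last (last x p) (rev (belast x p)) = x.
Proof. by case: p => // z p; rewrite /= rev_cons last_rcons. Qed.

Lemma plen_rev x p : plen w (last x p) (rev (belast x p)) = plen w x p.
Proof.
elim: p x => [|y p IH] x //=.
rewrite rev_cons -cats1 plen_cat /= last_rev_belast IH addr0 addrC.
by rewrite wsym.
Qed.

Lemma walk_rev x y p : walk e x y p -> walk e y x (rev (belast x p)).
Proof.
move=> [pp <-]; split; last exact: last_rev_belast.
rewrite rev_path; move: pp; apply: sub_path => a b; by rewrite esym.
Qed.

Lemma shortest_rev x y p : shortest e w x y p -> shortest e w y x (rev (belast x p)).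
Proof.
move=> [wp sp]; split; first exact: walk_rev.
move=> q wq; have wq' := walk_rev wq.
have e1 : plen w y (rev (belast x p)) = plen w x p.
  by case: wp => _ <-; rewrite plen_rev.
have e2 : plen w x (rev (belast y q)) = plen w y q.
  by case: wq => _ <-; rewrite plen_rev.
by rewrite e1 -e2; apply: sp.
Qed.

Lemma shorten_walk x p : path e x p -> ~~ uniq (x :: p) ->
  exists p', [/\ path e x p', last x p' = last x p, (size p' < size p)%N
                & plen w x p' < plen w x p].
Proof.
elim: p x => [|y p IH] x //.
move=> pp; rewrite [uniq _]/= negb_and negbK => /orP[xin|nu].
  move: pp; case/splitPr: xin => p1 p2.
  rewrite cat_path => /andP[pp1 /= /andP[ex pp2]].
  exists p2; split => //.
  - by rewrite last_cat.
  - by rewrite size_cat /= addnS ltnS leq_addl.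
  rewrite plen_cat /= addrA ltrDr.
  by rewrite ltr_wpDl ?plen_ge0 ?wpos.
move: pp => /= /andP[exy pp].
have [p' [pp' lp' sp' lenp']] := IH y pp nu.
exists (y :: p'); split => //=.
- by rewrite exy.
- by rewrite ltrD2l.
Qed.

Lemma reduce_walk x p : path e x p -> exists p',
  [/\ path e x p', last x p' = last x p, (size p' < #|V|)%N & plen w x p' <= plen w x p].
Proof.
have [n] := ubnP (size p); elim: n p => // n IH p szp pp.
case: (ltnP (size p) #|V|) => hs; first by exists p.
have nu : ~~ uniq (x :: p).
  apply/negP => /card_uniqP hc.
  have := max_card (mem (x :: p)); rewrite hc /=.
  by rewrite ltnNge hs.
have [p1 [pp1 l1 s1 len1]] := shorten_walk pp nu.
have [p2 [pp2 l2 s2 len2]] := IH p1 (leq_trans s1 (ltnSE szp)) pp1.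
exists p2; split => //; first by rewrite l2.
by apply: le_trans len2 (ltW len1).
Qed.

Lemma shortest_small x y p : shortest e w x y p -> (size p < #|V|)%N.
Proof.
move=> [[pp lp] sp].
case: (ltnP (size p) #|V|) => // hs; exfalso.
have nu : ~~ uniq (x :: p).
  apply/negP => /card_uniqP hc.
  have := max_card (mem (x :: p)); rewrite hc /=.
  by rewrite ltnNge hs.
have [p1 [pp1 l1 s1 len1]] := shorten_walk pp nu.
have := sp p1; rewrite /walk l1 lp => /(_ (conj pp1 erefl)).
by rewrite leNgt len1.
Qed.

Lemma shortest_plen x y p q : shortest e w x y p -> shortest e w x y q ->
  plen w x p = plen w x q.
Proof.
move=> [wp sp] [wq sq]; apply/le_anti; rewrite sp // sq //.
Qed.

Lemma maxhop_ge x y p : shortest e w x y p -> x != y -> (size p <= maxhop e w x y)%N.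
Proof.
move=> sh nxy; rewrite /maxhop (negbTE nxy).
have hs := shortest_small sh.
have := @leq_bigmax _ (fun k : 'I_#|V| =>
   if pdec (exists p, shortest e w x y p /\ size p = k) then (k : nat) else 0%N)
   (Ordinal hs).
case: pdecP => //= -[]; by exists p.
Qed.

Lemma maxhop_DG x y : (maxhop e w x y <= DG e w)%N.
Proof.
rewrite /DG; apply: (leq_trans _ (@leq_bigmax _ (fun s => \max_t maxhop e w s t) x)).
exact: (@leq_bigmax _ (fun y => maxhop e w x y) y).
Qed.

End Graph.

Section Proc.
Variables (R : realFieldType) (V : finType) (w : V -> V -> R).

Definition cand (v u : V) (d : option R) := oadd d (w u v).

Lemma proc_D v u t' (m : option R * R * R) ns t :
  sD (proc w v u t' m ns) t =
  if t == t' then (if olt (cand v u m.1.1) (sD ns t) then cand v u m.1.1 else sD ns t)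
  else sD ns t.
Proof.
case: m => [[d s] b]; rewrite /proc /cand /=.
case: ifP => h1; [|case: ifP => h2; [|case: ifP => h3]];
by rewrite /upd /=; case: eqP => // ->; rewrite h1.
Qed.

Lemma proc_NH v u t' (m : option R * R * R) ns t :
  sNH (proc w v u t' m ns) t =
  if t == t' then
    (if olt (cand v u m.1.1) (sD ns t) then sNH ns t :\ u
     else if cand v u m.1.1 == sD ns t then u |: (sNH ns t :\ u) else sNH ns t :\ u)
  else sNH ns t.
Proof.
case: m => [[d s] b]; rewrite /proc /cand /=.
case: ifP => h1; [|case: ifP => h2; [|case: ifP => h3]];
by rewrite /upd /=; case: eqP => // ->; rewrite ?h1 ?h2.
Qed.

Lemma proc_PH v u t' (m : option R * R * R) ns t :
  sPH (proc w v u t' m ns) t =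
  if t == t' then
    (if olt (cand v u m.1.1) (sD ns t) then sPH ns t :\ u
     else if cand v u m.1.1 == sD ns t then sPH ns t :\ u
     else if osub m.1.1 (w u v) == sD ns t then u |: (sPH ns t :\ u) else sPH ns t :\ u)
  else sPH ns t.
Proof.
case: m => [[d s] b]; rewrite /proc /cand /=.
case: ifP => h1; [|case: ifP => h2; [|case: ifP => h3]];
by rewrite /upd /=; case: eqP => // ->; rewrite ?h1 ?h2 ?h3.
Qed.

End Proc.

Definition ole {R : realFieldType} (a b : option R) : bool :=
  match b with None => true | Some y => if a is Some x then x <= y else false end.

Lemma ole_refl (R : realFieldType) (a : option R) : ole a a.
Proof. by case: a => //= x. Qed.

Lemma ole_trans (R : realFieldType) (a b c : option R) : ole a b -> ole b c -> ole a c.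
Proof.
case: c => [z|] //; case: b => [y|] //; case: a => [x|] //=.
exact: le_trans.
Qed.

Lemma nolt_ole (R : realFieldType) (a b : option R) : ~~ olt a b -> ole b a.
Proof. by case: a => [x|]; case: b => [y|] //=; rewrite -leNgt. Qed.

Lemma olt_ole (R : realFieldType) (a b : option R) : olt a b -> ole a b.
Proof. by case: a => [x|]; case: b => [y|] //= /ltW. Qed.

Lemma ole_add (R : realFieldType) (a b : option R) c : ole a b -> ole (oadd a c) (oadd b c).
Proof. by case: b => [y|]; case: a => [x|] //=; rewrite lerD2r. Qed.

Section Main.
Variables (R : realFieldType) (V : finType) (e : rel V) (w : V -> V -> R)
  (sched : nat -> V -> seq (V * V)).
Hypotheses (esymm : symmetric e) (wpos : forall u v, e u v -> 0 < w u v)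
  (wsym : forall u v, w u v = w v u)
  (hsched : forall n v, perm_eq (sched n v) (msgs e v))
  (conn : forall x y, connect e x y).
Variable t : V.

Lemma msgsP v u t' : ((u, t') \in msgs e v) = e v u.
Proof.
apply/allpairsP/idP => [[[a b] /= [ha hb [-> _]]] | h].
  by rewrite mem_enum in ha.
by exists (u, t'); rewrite /= !mem_enum.
Qed.

Lemma sched_mem n v u t' : ((u, t') \in sched n v) = e v u.
Proof. by rewrite (perm_mem (hsched n v)) msgsP. Qed.

Lemma sched_nbr n v m : m \in sched n v -> e v m.1.
Proof. by case: m => u t'; rewrite sched_mem. Qed.

Lemma process_cons st v m ms ns : process w st v (m :: ms) ns =
  process w st v ms (proc w v m.1 m.2 (msg st m.1 m.2) ns).
Proof. by []. Qed.

Lemma proc_le v u t' m ns : ole (sD (proc w v u t' m ns) t) (sD ns t).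
Proof.
rewrite proc_D; case: eqP => _; last exact: ole_refl.
case: ifP => h; [exact: olt_ole | exact: ole_refl].
Qed.

Lemma proc_le_cand v u m ns : ole (sD (proc w v u t m ns) t) (cand w v u m.1.1).
Proof.
rewrite proc_D eqxx; case: ifP => h; first exact: ole_refl.
by apply: nolt_ole; rewrite h.
Qed.

Lemma process_le st v ms ns : ole (sD (process w st v ms ns) t) (sD ns t).
Proof.
elim: ms ns => [|m ms IH] ns; first exact: ole_refl.
rewrite process_cons; apply: ole_trans (IH _) (proc_le _ _ _ _ _).
Qed.

Lemma process_le_cand st v ms ns u : (u, t) \in ms ->
  ole (sD (process w st v ms ns) t) (cand w v u (sD (st u) t)).
Proof.
elim: ms ns => [|m ms IH] ns //; rewrite in_cons => /orP[/eqP <-|hin].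
  rewrite process_cons; apply: ole_trans (process_le _ _ _ _) _.
  exact: proc_le_cand.
by rewrite process_cons; apply: IH.
Qed.

Definition good x (D : option R) :=
  forall d, D = Some d -> exists p, walk e x t p /\ plen w x p = d.

Lemma process_good st v ms ns : (forall u, good u (sD (st u) t)) ->
  (forall m, m \in ms -> e v m.1) -> good v (sD ns t) ->
  good v (sD (process w st v ms ns) t).
Proof.
move=> gst; elim: ms ns => [|[u t'] ms IH] ns // hm gns.
rewrite process_cons; apply: IH; first by move=> m hm'; apply: hm; rewrite in_cons hm' orbT.
have evu : e v u by have := hm (u, t'); rewrite in_cons eqxx; apply.
move=> d; rewrite proc_D /=; case: eqP => [<-|_]; first case: ifP => _.
all: try by apply: gns.
rewrite /cand /msg /=; move: d; case hD: (sD (st u) t) => [d0|] //= d' /(congr1 (odflt 0)) /= <-.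
have [p [[pp lp] <-]] := gst u d0 hD.
exists (u :: p); split; first by split => //=; rewrite evu.
by rewrite /= addrC wsym.
Qed.

Lemma run_succ n v : run w sched n.+1 v =
  process w (run w sched n) v (sched n v) (run w sched n v).
Proof. by []. Qed.

Lemma run_good n x : good x (sD (run w sched n x) t).
Proof.
elim: n x => [|n IH] x.
  rewrite /= /init /=; case: (eqVneq x t) => [->|_] // d /(congr1 (odflt 0)) /= <-.
  by exists [::]; split.
rewrite run_succ; apply: process_good => //; first exact: sched_nbr.
Qed.

Lemma run_upper n x q : walk e x t q -> (size q <= n)%N ->
  ole (sD (run w sched n x) t) (Some (plen w x q)).
Proof.
elim: n x q => [|n IH] x q.
  case: q => // -[_ /= <-] _; by rewrite /= /init /= eqxx.
case: q => [|u q] [pq lq] hs.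
  apply: ole_trans (process_le _ _ _ _) _.
  exact: IH.
case/andP: pq => exu pq.
rewrite run_succ.
apply: ole_trans (process_le_cand _ _ _ (_ : (u, t) \in _)) _.
  by rewrite sched_mem.
have := IH u q (conj pq lq) hs.
move/(ole_add (w u x)); rewrite /cand /=.
by rewrite addrC wsym.
Qed.

Lemma good_lb x D p d : good x D -> shortest e w x t p -> D = Some d -> plen w x p <= d.
Proof. by move=> g [_ sp] /g [q [wq <-]]; apply: sp. Qed.

Lemma exists_shortest x : exists p, shortest e w x t p.
Proof.
have [p0 pp0 lp0] := connectP (conn x t).
have [p1 [pp1 lp1 s1 _]] := reduce_walk wpos pp0.
have := run_upper (n := #|V|) (conj pp1 (etrans lp1 (esym lp0))) (ltnW s1).
case hD: (sD _ t) => [d|] // _.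
have [p [wp hp]] := @run_good #|V| x d hD.
exists p; split => // q [pq lq]; rewrite hp.
have [q1 [pq1 lq1 sq1 leq1]] := reduce_walk wpos pq.
have := run_upper (n := #|V|) (conj pq1 (etrans lq1 lq)) (ltnW sq1).
rewrite hD /= => h; exact: le_trans h leq1.
Qed.

Lemma Dexact n x p : shortest e w x t p -> (size p <= n)%N ->
  sD (run w sched n x) t = Some (plen w x p).
Proof.
move=> sp hs; have := run_upper (proj1 sp) hs.
case hD: (sD _ t) => [d|] //= hle.
by rewrite (@le_anti _ _ d (plen w x p)) // hle (good_lb (@run_good n x) sp hD).
Qed.

Lemma shortest_hop x : exists p, shortest e w x t p /\ (size p <= maxhop e w x t)%N.
Proof.
case: (eqVneq x t) => [->|nxt].
  exists [::]; split => //; split => // q [pq _]; have h := plen_ge0 wpos pq; exact: h.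
have [p sp] := exists_shortest x; exists p; split => //.
exact: maxhop_ge.
Qed.

Lemma Dfinal n x p : shortest e w x t p -> (maxhop e w x t <= n)%N ->
  sD (run w sched n x) t = Some (plen w x p).
Proof.
move=> sp hn; have [q [sq hq]] := shortest_hop x.
by rewrite (Dexact sq (leq_trans hq hn)) (shortest_plen sq sp).
Qed.



Lemma process_sets st v ms ns dv :
  sD ns t = Some dv ->
  (forall u, (u, t) \in ms -> ~~ olt (cand w v u (sD (st u) t)) (Some dv)) ->
  [/\ sD (process w st v ms ns) t = Some dv,
      sNH (process w st v ms ns) t =
        [set x | if (x, t) \in ms then cand w v x (sD (st x) t) == Some dv
                 else x \in sNH ns t] &
      sPH (process w st v ms ns) t =
        [set x | if (x, t) \in ms then
                   (cand w v x (sD (st x) t) != Some dv) &&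
                   (osub (sD (st x) t) (w x v) == Some dv)
                 else x \in sPH ns t]].
Proof.
elim: ms ns => [|[u t'] ms IH] ns hD hc.
  by split => //; apply/setP => x; rewrite inE.
rewrite process_cons.
have hc' : forall u0, (u0, t) \in ms -> ~~ olt (cand w v u0 (sD (st u0) t)) (Some dv).
  by move=> u0 h; apply: hc; rewrite in_cons h orbT.
case: (eqVneq t' t) => [ett|ntt].
{ subst t'.
  have hu : ~~ olt (cand w v u (sD (st u) t)) (Some dv) by apply: hc; exact: mem_head.
  have hD' : sD (proc w v (u, t).1 (u, t).2 (msg st (u, t).1 (u, t).2) ns) t = Some dv.
    by rewrite proc_D /= eqxx hD (negbTE hu).
  have [-> -> ->] := IH _ hD' hc'.
  split => //; apply/setP => x; rewrite ?proc_NH ?proc_PH /= eqxx hD (negbTE hu) !inE.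
  all: (case: ((x, t) \in ms); first by rewrite orbT); rewrite orbF xpair_eqE eqxx andbT.
  all: case: (eqVneq x u) => [->|nxu] /=.
  all: case: (cand w v u (sD (st u) t) == Some dv);
       case: (osub (sD (st u) t) (w u v) == Some dv) => //=.
  all: by rewrite ?inE ?eqxx ?(negbTE nxu) ?andbT ?orbT. }
have hD' : sD (proc w v (u, t').1 (u, t').2 (msg st (u, t').1 (u, t').2) ns) t = Some dv.
  by rewrite proc_D /= eq_sym (negbTE ntt).
have [-> -> ->] := IH _ hD' hc'.
have ntt' : (t == t') = false by rewrite eq_sym (negbTE ntt).
split => //; apply/setP => x; rewrite ?proc_NH ?proc_PH /= ntt' !inE xpair_eqE ntt' andbF //.
Qed.

Definition nbr_ok v (ns : nstate R V) :=
  forall t0 x, (x \in sNH ns t0 -> e v x) /\ (x \in sPH ns t0 -> e v x).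

Lemma process_nbr st v ms ns : (forall m, m \in ms -> e v m.1) ->
  nbr_ok v ns -> nbr_ok v (process w st v ms ns).
Proof.
elim: ms ns => [|[u t'] ms IH] ns // hm hok.
have evu : e v u by have := hm (u, t'); rewrite in_cons eqxx; apply.
rewrite process_cons; apply: IH.
  by move=> m hm'; apply: hm; rewrite in_cons hm' orbT.
move=> t0 x; rewrite proc_NH proc_PH /=.
have [h1 h2] := hok t0 x.
case: eqP => _; last by split.
split; repeat case: ifP => _; rewrite !inE ?in_setD1;
  by [move=> /andP[_ /h1] | move=> /andP[_ /h2] |
      case/orP => [/eqP -> //| /andP[_ /h1]] | case/orP => [/eqP -> //| /andP[_ /h2]]].
Qed.

Lemma run_nbr n v : nbr_ok v (run w sched n v).
Proof.
elim: n v => [|n IH] v.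
  by move=> t0 x; rewrite /= /init /= !inE.
rewrite run_succ; apply: process_nbr => //; exact: sched_nbr.
Qed.

Lemma nolt n v pv u : shortest e w v t pv -> e v u ->
  ~~ olt (cand w v u (sD (run w sched n u) t)) (Some (plen w v pv)).
Proof.
move=> sv evu; rewrite /cand.
case hD: (sD (run w sched n u) t) => [d|] //=.
have [p [[pp lp] hp]] := @run_good n u d hD.
rewrite -leNgt.
have h := proj2 sv (u :: p) (conj (introT andP (conj evu pp)) lp).
by move: h; rewrite /= hp wsym addrC.
Qed.

Lemma NH_equiv n v pv u : shortest e w v t pv -> (maxhop e w v t <= n)%N -> e v u ->
  (cand w v u (sD (run w sched n u) t) == Some (plen w v pv)) = (u \in NHset e w v t).
Proof.
move=> sv hn evu; rewrite inE evu /=; apply/idP/pdecP.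
  rewrite /cand; case hD: (sD (run w sched n u) t) => [d|] //= /eqP [hd].
  have [p [[pp lp] hp]] := @run_good n u d hD.
  exists p; split; first by split => //=; rewrite evu.
  move=> q wq; rewrite /= hp wsym addrC hd; exact: (proj2 sv).
move=> [p sp].
have nvt : v != t.
  apply/eqP => vt; move: sp; rewrite vt => sp.
  have := (proj2 sp) [::] (conj isT erefl).
  rewrite /= leNgt => /negP; apply.
  have ep : e t u by rewrite -vt.
  apply: (lt_le_trans (wpos ep)); rewrite lerDl.
  by case: sp => [[/= /andP[_ pp] _] _]; have h := plen_ge0 wpos pp; exact: h.
have hs := maxhop_ge wpos sp nvt.
have sp' : shortest e w u t p.
  case: sp => [[/= /andP[_ pp] lp] sq]; split => // q [pq lq].
  have := sq (u :: q) (conj (introT andP (conj evu pq)) lq).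
  by rewrite /= lerD2l.
rewrite (Dexact sp' (leq_trans (leqnSn _) (leq_trans hs hn))) /=.
by rewrite -(shortest_plen sp sv) /= addrC wsym.
Qed.

Lemma PH_equiv n v pv u : shortest e w v t pv -> (DG e w <= n)%N -> e v u ->
  ((cand w v u (sD (run w sched n u) t) != Some (plen w v pv)) &&
   (osub (sD (run w sched n u) t) (w u v) == Some (plen w v pv)))
  = (u \in PHset e w v t).
Proof.
move=> sv hn evu.
have [pu spu] := exists_shortest u.
rewrite /cand (Dfinal spu (leq_trans (maxhop_DG e w u t) hn)) /=.
set du := plen w u pu; set dv := plen w v pv; set wu := w u v.
have key : (u \in PHset e w v t) = (du == dv + wu).
  rewrite inE evu /=; apply/pdecP/eqP.
    move=> [q [sq lq]].
    have := shortest_rev esymm wsym sq.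
    rewrite belast_rcons lastI lq rev_rcons => sr.
    set r := rev (belast t q) in sr.
    have e1 := shortest_plen sr spu; rewrite /= in e1.
    have wr : walk e v t r by case: sr => [[/= /andP[_ pr] lr] _].
    have h1 : dv <= plen w v r := proj2 sv r wr.
    have euv : e u v by rewrite esymm.
    have h2 : du <= wu + dv.
      have := proj2 spu (v :: pv); rewrite /= -/dv -/wu; apply.
      by case: sv => [[pv1 lv] _]; split => //=; rewrite euv.
    apply/le_anti; rewrite addrC h2 /= /du -e1 /wu lerD2l //.
  move=> hd.
  have euv : e u v by rewrite esymm.
  have sp2 : shortest e w u t (v :: pv).
    case: sv => [[pv1 lv] sv']; split; first by split => //=; rewrite euv.
    move=> q wq; rewrite /= -/dv -/wu addrC -hd; exact: (proj2 spu).
  have := shortest_rev esymm wsym sp2; rewrite /= rev_cons => sr.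
  exists (rev (belast v pv)); split => //.
  have := last_rev_belast v pv; by case: sv => [[_ ->] _].
rewrite key; apply/idP/idP.
  by case/andP => _ /eqP [<-]; rewrite subrK.
move/eqP => ->; rewrite addrK eqxx andbT; apply/eqP => -[].
apply/eqP; rewrite -addrA -[X in _ == X]addr0 (inj_eq (addrI _)).
have hw : 0 < wu by rewrite /wu wsym; exact: wpos.
by rewrite gt_eqF // addr_gt0.
Qed.

Lemma main_NH v : forall n j : nat, ((maxhop e w v t).+1 <= n)%N ->
       sNH (mid w sched n j v) t = NHset e w v t.
Proof.
have [pv sv] := exists_shortest v.
have hrun : forall m, (maxhop e w v t <= m)%N -> sNH (run w sched m.+1 v) t = NHset e w v t.
  move=> m hm; rewrite run_succ.
  have [_ -> _] := process_sets (st := run w sched m) (ms := sched m v) (Dfinal sv hm)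
    (fun u h => nolt m sv (sched_nbr h)).
  apply/setP => x; rewrite inE sched_mem.
  case evx: (e v x); first by rewrite NH_equiv.
  rewrite inE evx; apply/negP => /(proj1 (run_nbr m v t x)); by rewrite evx.
case=> // m j hm; rewrite /mid.
have hm' : (maxhop e w v t <= m.+1)%N by apply: leq_trans hm.
have [_ -> _] := process_sets (st := run w sched m.+1) (ms := take j (sched m.+1 v)) (Dfinal sv hm')
    (fun u h => nolt m.+1 sv (sched_nbr (mem_take h))).
apply/setP => x; rewrite inE; case: ifP => h; last by rewrite hrun.
by rewrite NH_equiv // -(sched_mem m.+1 v x t) (mem_take h).
Qed.

Lemma main_PH v : forall n j : nat, ((DG e w).+2 <= n)%N ->
       sPH (mid w sched n j v) t = PHset e w v t.
Proof.
have [pv sv] := exists_shortest v.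
have hDG : (maxhop e w v t <= DG e w)%N := maxhop_DG e w v t.
have hrun : forall m, (DG e w <= m)%N -> sPH (run w sched m.+1 v) t = PHset e w v t.
  move=> m hm; rewrite run_succ.
  have [_ _ ->] := process_sets (st := run w sched m) (ms := sched m v) (Dfinal sv (leq_trans hDG hm))
    (fun u h => nolt m sv (sched_nbr h)).
  apply/setP => x; rewrite inE sched_mem.
  case evx: (e v x); first by rewrite PH_equiv.
  rewrite inE evx; apply/negP => /(proj2 (run_nbr m v t x)); by rewrite evx.
case=> // m j hm; rewrite /mid.
have hm2 : (DG e w <= m)%N by rewrite -ltnS; apply: ltnW.
have hm' : (DG e w <= m.+1)%N by apply: leq_trans hm2 (leqnSn _).
have [_ _ ->] := process_sets (st := run w sched m.+1) (ms := take j (sched m.+1 v)) (Dfinal sv (leq_trans hDG hm'))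
    (fun u h => nolt m.+1 sv (sched_nbr (mem_take h))).
apply/setP => x; rewrite inE; case: ifP => h; last by rewrite hrun.
by rewrite PH_equiv // -(sched_mem m.+1 v x t) (mem_take h).
Qed.

End Main.

Theorem lemma2 (R : realFieldType) (V : finType) (e : rel V) (w : V -> V -> R)
    (sched : nat -> V -> seq (V * V)) :
  symmetric e -> irreflexive e -> (forall x y, connect e x y) ->
  (forall u v, e u v -> 0 < w u v) -> (forall u v, w u v = w v u) ->
  (forall n v, perm_eq (sched n v) (msgs e v)) ->
  forall v t : V,
    (forall n j : nat, ((maxhop e w v t).+1 <= n)%N ->
       sNH (mid w sched n j v) t = NHset e w v t) /\
    (forall n j : nat, ((DG e w).+2 <= n)%N ->
       sPH (mid w sched n j v) t = PHset e w v t).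
Proof.
move=> es _ conn wp ws hs v t; split.
  exact: (main_NH wp ws hs conn).
exact: (main_PH es wp ws hs conn).
Qed.
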